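(* Let $F$ be a countable subfield of $\mathbb{R}$, let $\mathcal R=\langle R,<,+,-,\times\rangle$ be an ordered real closed field containing $F$ as a subfield with the order of $\mathcal R$ agreeing with that of $F$, and let $h$ be an $F$-bijection of $\mathcal R$. Then the structure $h^{-1}[\mathcal R]$ is a model of $T[F]^*$.
   Context: An $F$-bijection of $\mathcal R$ is a map $h:R\to R$ that is an order-preserving bijection with $h(0)=0$, $h(1)=1$ and $h(ax)=ah(x)$ for all $x\in R$, $a\in F$. $h^{-1}[\mathcal R]$ is the structure with domain $R$ in which $0,1,+,<$ are interpreted as in $\mathcal R$, each $c_a$ ($a\in F$) is interpreted as $a$, and $\times$ is interpreted as $x\otimes y=h^{-1}(h(x)h(y))$. $T[F]^*$ is the theory in the language $\{0,1,+,\times,<\}\cup\{c_a:a\in F\}$ with axioms: (1) $0,+,<$ form an ordered abelian group; (2) the positive elements form a divisible ordered abelian group under $\times$ with identity $1$ and order $<$; (3a) $c_{a+b}=c_a+c_b$, (3b) $c_{ab}=c_a\times c_b$, (3c) $0<c_a$ for $a>0$; (4a) $c_{a+b}\times x=(c_a\times x)+(c_b\times x)$, (4b) $c_a\times(x+y)=(c_a\times x)+(c_a\times y)$, for all $a,b\in F$ and all $x,y$. *)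

(* Defs.v *)
(* R is an rcfType (ordered real closed field); the ambient
   real line containing F is an abstract realType Re (unique up to iso). *)
From HB Require Import structures.
From mathcomp Require Import all_boot all_order all_algebra.
From mathcomp Require Import reals.
Set Implicit Arguments. Unset Strict Implicit. Unset Printing Implicit Defensive.
Import Order.TTheory GRing.Theory Num.Theory.
Local Open Scope ring_scope.

Definition is_subfield (Re : realType) (F : {pred Re}) : Prop :=
  [/\ 0 \in F, 1 \in F,
      {in F &, forall a b, a - b \in F},
      {in F &, forall a b, a * b \in F} &
      {in F, forall a, a^-1 \in F}].

Definition countable_pred (T : Type) (F : {pred T}) : Prop :=
  exists f : T -> nat, {in F &, injective f}.

Definition order_field_embedding (Re : realType) (R : rcfType)
    (F : {pred Re}) (iota : Re -> R) : Prop :=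
  [/\ iota 1 = 1,
      {in F &, forall a b, iota (a + b) = iota a + iota b},
      {in F &, forall a b, iota (a * b) = iota a * iota b} &
      {in F &, forall a b, (a < b) = (iota a < iota b)}].

Definition F_bijection (Re : realType) (R : rcfType)
    (F : {pred Re}) (iota : Re -> R) (h : R -> R) : Prop :=
  [/\ bijective h, {homo h : x y / x < y}, h 0 = 0, h 1 = 1 &
      forall a x, a \in F -> h (iota a * x) = iota a * h x].

Fixpoint mpow (T : Type) (mul : T -> T -> T) (x : T) (n : nat) : T :=
  match n with
  | 0 => x
  | n'.+1 => mul (mpow mul x n') x
  end.
(* mpow mul x n = x^(n+1) *)

Definition models_TFstar (Re : realType) (F : {pred Re}) (T : Type)
    (zero one : T) (add mul : T -> T -> T) (lt : T -> T -> Prop) (c : Re -> T)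
    : Prop :=
  ((forall x y z, add x (add y z) = add (add x y) z) /\
      (forall x y, add x y = add y x) /\
      (forall x, add zero x = x) /\
      (forall x, exists y, add x y = zero) /\
      (forall x, ~ lt x x) /\
      (forall x y z, lt x y -> lt y z -> lt x z) /\
      (forall x y, lt x y \/ x = y \/ lt y x) /\
      (forall x y z, lt x y -> lt (add x z) (add y z)))
  /\
  ((forall x y, lt zero x -> lt zero y -> lt zero (mul x y)) /\
      (forall x y z, lt zero x -> lt zero y -> lt zero z ->
          mul x (mul y z) = mul (mul x y) z) /\
      (forall x y, lt zero x -> lt zero y -> mul x y = mul y x) /\
      lt zero one /\
      (forall x, lt zero x -> mul one x = x) /\
      (forall x, lt zero x -> exists y, lt zero y /\ mul x y = one) /\
      (forall x y z, lt zero x -> lt zero y -> lt zero z -> lt x y ->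
          lt (mul x z) (mul y z)) /\
      (forall x (n : nat), lt zero x ->
          exists y, lt zero y /\ mpow mul y n = x))
  /\
  ((forall a b, a \in F -> b \in F -> c (a + b) = add (c a) (c b)) /\
      (forall a b, a \in F -> b \in F -> c (a * b) = mul (c a) (c b)) /\
      (forall a, a \in F -> 0 < a -> lt zero (c a)))
  /\
  ((forall a b x, a \in F -> b \in F ->
          mul (c (a + b)) x = add (mul (c a) x) (mul (c b) x)) /\
      (forall a x y, a \in F -> mul (c a) (add x y) = add (mul (c a) x) (mul (c a) y))).

(* Main.v *)
Require Import Defs.
From HB Require Import structures.
From mathcomp Require Import all_boot all_order all_algebra.
From mathcomp Require Import reals.
Import Order.TTheory GRing.Theory Num.Theory.
Local Open Scope ring_scope.

Lemma rcf_root (R : rcfType) (x : R) (n : nat) : 0 < x ->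
  exists y : R, 0 < y /\ y ^+ n.+1 = x.
Proof.
move=> x0.
have ab : (0:R) <= 1 + x by rewrite addr_ge0 // ltW.
have pab : ('X ^+ n.+1 - x%:P).[0] <= 0 <= ('X ^+ n.+1 - x%:P).[1 + x].
  rewrite !hornerE expr0n /= sub0r oppr_le0 (ltW x0) /= subr_ge0.
  apply: le_trans (_ : 1 + x <= _).
    by rewrite lerDr.
  rewrite -[X in X <= _]expr1; apply: ler_eXn2l => //.
  by rewrite ltrDl.
have [y /andP[y0 _] ry] := @poly_ivt R ('X ^+ n.+1 - x%:P) 0 (1 + x) ab pab.
have ey : y ^+ n.+1 = x by move: ry; rewrite rootE !hornerE subr_eq0 => /eqP.
exists y; split=> //; rewrite lt_neqAle y0 andbT; apply/eqP=> y0'.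
by move: ey x0; rewrite -y0' expr0n /= => <-; rewrite ltxx.
Qed.

Theorem theorem9p2 (Re : realType) (F : {pred Re}) (R : rcfType)
    (iota : Re -> R) (h hinv : R -> R) :
  is_subfield F -> countable_pred F ->
  order_field_embedding F iota ->
  F_bijection F iota h ->
  cancel h hinv -> cancel hinv h ->
  models_TFstar F 0 1 +%R (fun x y => hinv (h x * h y))
    (fun x y => x < y) iota.
Proof.
move=> [F0 F1 FB FM FV] _ [i1 iD iM iL] [_ hlt h0 h1 hF] hK hinvK.
have hle : {mono h : x y / x <= y} := le_mono hlt.
have hmlt : {mono h : x y / x < y} := leW_mono hle.
have hipos : forall x, (0 < hinv x) = (0 < x).
  by move=> x; have := hmlt 0 (hinv x); rewrite h0 hinvK.
have hpos : forall x, (0 < h x) = (0 < x).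
  by move=> x; have := hmlt 0 x; rewrite h0.
have hilt : forall x y, (hinv x < hinv y) = (x < y).
  by move=> x y; have := hmlt (hinv x) (hinv y); rewrite !hinvK.
have FD : {in F &, forall a b, a + b \in F}.
  move=> a b Fa Fb; have := FB a (0 - b) Fa (FB 0 b F0 Fb).
  by rewrite sub0r opprK.
have hi : forall a, a \in F -> h (iota a) = iota a.
  by move=> a Fa; rewrite -[iota a]mulr1 hF // h1.
have mi : forall a x, a \in F -> hinv (h (iota a) * h x) = iota a * x.
  by move=> a x Fa; rewrite hi // -hF // hK.
have i0 : iota 0 = 0.
  have e := iD 0 0 F0 F0; rewrite addr0 in e.
  by apply: (addrI (iota 0)); rewrite addr0 -e.
split; [|split; [|split]].
- split; first exact: addrA.
  split; first exact: addrC.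
  split; first exact: add0r.
  split; [|split; [|split; [|split]]].
  + by move=> x; exists (- x); rewrite subrr.
  + by move=> x; rewrite ltxx.
  + by move=> x y z; apply: lt_trans.
  + by move=> x y; case: (ltgtP x y) => H; auto.
  + by move=> x y z; rewrite ltrD2r.
- split; [|split; [|split; [|split; [|split; [|split; [|split]]]]]].
  + by move=> x y x0 y0; rewrite hipos mulr_gt0 ?hpos.
  + by move=> x y z _ _ _; rewrite !hinvK mulrA.
  + by move=> x y _ _; rewrite mulrC.
  + exact: ltr01.
  + by move=> x _; rewrite h1 mul1r hK.
  + move=> x x0; exists (hinv (h x)^-1); rewrite hipos invr_gt0 hpos x0; split=> //.
    by rewrite hinvK mulfV ?gt_eqF ?hpos // -h1 hK.
  + by move=> x y z _ _ z0 xy; rewrite hilt ltr_pM2r ?hpos // hmlt.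
  + move=> x n x0; have [y [y0 ey]] := @rcf_root R (h x) n (ltac:(by rewrite hpos)).
    exists (hinv y); rewrite hipos y0; split=> //.
    suff -> : forall m, mpow (fun x y => hinv (h x * h y)) (hinv y) m = hinv (y ^+ m.+1).
      by rewrite ey hK.
    elim=> [|m IH] /=; first by rewrite expr1.
    by rewrite IH !hinvK -exprSr.
- split; [|split].
  + by move=> a b Fa Fb; rewrite iD.
  + by move=> a b Fa Fb; rewrite !hi // -iM // -{2}(hi (a*b) (FM a b Fa Fb)) hK.
  + by move=> a Fa a0; rewrite -i0 -iL.
- split.
  + by move=> a b x Fa Fb; rewrite !mi ?FD // iD // mulrDl.
  + by move=> a x y Fa; rewrite !mi // mulrDr.
Qed.
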